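(* For every integer $r$ there exists an integer $k=k(r)$ such that the following holds. If $G$ is a bipartite graph with bipartition $(X,Y)$ and $\eta_G(m)\le r\cdot m$ for every positive integer $m$, then $Y$ can be colored with $k$ colors such that for every non-isolated vertex $v\in X$ there exists a color which appears an odd number of times in $N(v)$.
   Context: $N(v)$ is the open neighborhood of $v$. The neighborhood complexity of $G$ is $\eta_G(m)=\max_A|\{N(v)\cap A: v\in V(G)\}|$ over all $m$-element subsets $A\subseteq V(G)$. The coloring of $Y$ need not be proper. *)

(* Defs.v *)
From mathcomp Require Import all_boot.
Set Implicit Arguments. Unset Strict Implicit. Unset Printing Implicit Defensive.

Definition simple_graph (T : finType) (e : rel T) : Prop :=
  symmetric e /\ irreflexive e.

Definition nbhd (T : finType) (e : rel T) (v : T) : {set T} := [set u | e v u].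

Definition bipartition (T : finType) (e : rel T) (X Y : {set T}) : Prop :=
  [/\ X :&: Y = set0, X :|: Y = setT &
      forall u v, e u v -> (u \in X /\ v \in Y) \/ (u \in Y /\ v \in X)].

(* Neighbourhood complexity eta_G(m) = max over m-element A of
   #|{N(v) :&: A : v in V(G)}| (0 if there is no m-element subset). *)
Definition eta (T : finType) (e : rel T) (m : nat) : nat :=
  \max_(A : {set T} | #|A| == m) #|[set nbhd e v :&: A | v : T]|.

(* Main.v *)
Require Import Defs.
From mathcomp Require Import all_boot.
From mathcomp Require Import zify.
Set Implicit Arguments. Unset Strict Implicit. Unset Printing Implicit Defensive.

Section EB.
Variable Q : finType.

Lemma sum_powerset_split (A : {set Q}) z (f : {set Q} -> nat) : z \in A ->
  \sum_(S in powerset A) f S =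
  \sum_(S in powerset (A :\ z)) (f S + f (z |: S)).
Proof.
move=> zA; rewrite (bigID (fun S : {set Q} => z \in S)) big_split /= addnC; congr (_ + _).
  apply: eq_bigl => S; rewrite !inE; apply/andP/idP.
    by case=> sA zS; apply/subsetP => x xS; rewrite !inE (subsetP sA) // andbT;
       apply: contraNneq zS => <-.
  move=> sA; split; first by apply: subset_trans sA (subsetDl _ _).
  by apply/negP => zS; have := subsetP sA z zS; rewrite !inE eqxx.
rewrite (reindex_onto (fun T => z |: T) (fun S => S :\ z)) /=; last first.
  by move=> S; rewrite inE => /andP[_ zS]; rewrite setD1K.
apply: eq_bigl => T; rewrite !inE eqxx /= andbT.
apply/andP/idP.
  case=> sA /eqP E; rewrite -E; apply/subsetP => x; rewrite !inE => /andP[-> xT].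
  by rewrite /=; apply: (subsetP sA); rewrite !inE.
move=> sT; have zT : z \notin T by apply/negP => /(subsetP sT); rewrite !inE eqxx.
split; last by rewrite setU1K.
apply/subsetP => x; rewrite !inE => /orP[/eqP -> // | xT].
by have := subsetP sT x xT; rewrite !inE => /andP[].
Qed.


Definition shat (w : {set Q} -> nat) (S : {set Q}) :=
  forall U : {set Q}, U \subset S -> exists T, 0 < w T /\ T :&: S = U.
Definition Ew (A : {set Q}) (w : {set Q} -> nat) :=
  \sum_(u in A) \sum_(S in powerset (A :\ u)) minn (w S) (w (u |: S)).
Definition Ww (A : {set Q}) (w : {set Q} -> nat) := \sum_(S in powerset A) w S.

Lemma minmax_ineq a0 a1 b0 b1 : minn a0 b0 + minn a1 b1 <=
  minn (maxn a0 a1) (maxn b0 b1) + minn (minn a0 a1) (minn b0 b1).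
Proof. lia. Qed.

Lemma edge_bound n : forall (A : {set Q}) (w : {set Q} -> nat) (d : nat), #|A| = n ->
  (forall S : {set Q}, 0 < w S -> S \subset A) ->
  (forall S : {set Q}, S \subset A -> shat w S -> #|S| <= d) ->
  Ew A w <= d * Ww A w.
Proof.
elim: n => [|n IH] A w d cA supp vc.
  by move/eqP: cA; rewrite cards_eq0 => /eqP ->; rewrite /Ew big_set0.
have [z zA] : exists z, z \in A.
  by apply/set0Pn; rewrite -card_gt0 cA.
set A' := A :\ z.
have cA' : #|A'| = n by move: cA; rewrite (cardsD1 z A) zA => -[].
pose w1 (T : {set Q}) := if T \subset A' then maxn (w T) (w (z |: T)) else 0.
pose w2 (T : {set Q}) := if T \subset A' then minn (w T) (w (z |: T)) else 0.
have zA' : z \notin A' by rewrite !inE eqxx.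
have zT (T : {set Q}) : T \subset A' -> z \notin T.
  by move=> sT; apply/negP => /(subsetP sT); rewrite (negbTE zA').
have W : Ww A w = Ww A' w1 + Ww A' w2.
  rewrite /Ww (sum_powerset_split _ zA) -big_split; apply: eq_bigr => T.
  by rewrite inE => sT; rewrite /w1 /w2 sT /=; lia.
have E1 : Ew A w <= Ww A' w2 + (Ew A' w1 + Ew A' w2).
  rewrite /Ew (bigD1 z zA) /=; apply: leq_add.
    rewrite /Ww; apply: eq_leq; apply: eq_bigr => T; rewrite inE => sT.
    by rewrite /w2 sT.
  rewrite (eq_bigl (fun u => u \in A')); last by move=> u; rewrite !inE andbC.
  rewrite -big_split /=; apply: leq_sum => u; rewrite !inE => /andP[uz uA].
  have zAu : z \in A :\ u by rewrite !inE eq_sym uz.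
  rewrite (sum_powerset_split _ zAu) -big_split /=.
  have -> : A :\ u :\ z = A' :\ u.
    by apply/setP => x; rewrite !inE; case: (x == u); case: (x == z).
  apply: leq_sum => T; rewrite inE => sT.
  have sT' : T \subset A' by apply: subset_trans sT (subsetDl _ _).
  have suT : u |: T \subset A'.
    apply/subsetP => x; rewrite !inE => /orP[/eqP -> | xT].
      by rewrite uA andbT; apply: contraNneq uz => ->.
    by have := subsetP sT x xT; rewrite !inE => /and3P[_ -> ->].
  rewrite /w1 /w2 sT' suT.
  have -> : z |: (u |: T) = u |: (z |: T) by rewrite setUCA.
  exact: minmax_ineq.
have supp1 (S : {set Q}) : 0 < w1 S -> S \subset A'.
  by rewrite /w1; case: (S \subset A').
have supp2 (S : {set Q}) : 0 < w2 S -> S \subset A'.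
  by rewrite /w2; case: (S \subset A').
have sAA : A' \subset A by apply: subsetDl.
have IH1 : Ew A' w1 <= d * Ww A' w1.
  apply: IH => // S sS sh; apply: vc; first exact: subset_trans sS sAA.
  move=> U sU; have [T [wT TU]] := sh U sU.
  have sT := supp1 _ wT; move: wT; rewrite /w1 sT.
  case: (ltnP 0 (w T)) => [wT0 _ | wT0 wT]; first by exists T.
  exists (z |: T); split; first by move: wT wT0; case: (leqP (w T) (w (z |: T))) => h; lia.
  rewrite -TU; apply/setP => x; rewrite !inE.
  case: (eqVneq x z) => [-> | //]; rewrite /=.
  by have := zT _ sS; move/negbTE => ->; rewrite andbF.
have sh2 (S : {set Q}) : S \subset A' -> shat w2 S -> shat w (z |: S).
  move=> sS sh U sU.
  have sU' : U :\ z \subset S.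
    apply/subsetP => x; rewrite !inE => /andP[xz xU].
    by have := subsetP sU x xU; rewrite !inE (negbTE xz).
  have [T [wT TU]] := sh _ sU'.
  have sT := supp2 _ wT; move: wT; rewrite /w2 sT => wT.
  have zS := zT _ sS; have zTT := zT _ sT.
  have TUx x : (x \in T) && (x \in S) = (x != z) && (x \in U).
    by have := congr1 (fun X : {set Q} => x \in X) TU; rewrite !inE.
  case: (boolP (z \in U)) => zU.
    exists (z |: T); split; first by move: wT; rewrite leq_min => /andP[].
    apply/setP => x; rewrite !inE; case: (eqVneq x z) => [-> //| xz].
    by rewrite /= TUx xz.
  exists T; split; first by move: wT; rewrite leq_min => /andP[].
  apply/setP => x; rewrite !inE; case: (eqVneq x z) => [-> | xz].
    by rewrite (negbTE zTT) (negbTE zU).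
  by rewrite /= TUx xz.
have IH2 : Ew A' w2 <= d.-1 * Ww A' w2.
  apply: IH => // S sS sh.
  have := vc (z |: S).
  have -> : z |: S \subset A.
    apply/subsetP => x; rewrite !inE => /orP[/eqP -> //| xS].
    by have := subsetP sAA x (subsetP sS x xS).
  move=> /(_ isT (sh2 S sS sh)); rewrite cardsU1 (zT _ sS) /=; lia.
have D0 : d = 0 -> Ww A' w2 = 0.
  move=> d0; rewrite /Ww big1 // => T _.
  apply/eqP; rewrite -leqn0 leqNgt; apply/negP => wT.
  have sT := supp2 _ wT; move: wT; rewrite /w2 sT leq_min => /andP[w0 w1'].
  have zTT := zT _ sT.
  have : #|[set z]| <= d.
    apply: vc; first by rewrite sub1set.
    move=> U; rewrite subset1 => /orP[/eqP -> | /eqP ->].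
      exists (z |: T); split => //; apply/setP => x; rewrite !inE.
      by case: (eqVneq x z); rewrite /= ?andbF ?andbT // orbC.
    exists T; split => //; apply/setP => x; rewrite !inE.
    by case: (eqVneq x z) => [->|]; [rewrite (negbTE zTT) | rewrite andbF].
  by rewrite cards1 d0.
case: d vc IH1 IH2 D0 => [|d] vc IH1 IH2 D0.
  by rewrite W D0 // !mul0n in E1 *; lia.
rewrite W; move: E1 IH1 IH2; rewrite /=; nia.
Qed.

End EB.

Section DC.
Variable Q : finType.
Variable R : {set Q}.
Definition draws (j : nat) := [set B : {set Q} | (B \subset R) && (#|B| == j)].

Lemma double_count s (f : {set Q} -> Q -> nat) :
  \sum_(B' in draws s.+1) \sum_(z in B') f B' z =
  \sum_(B in draws s) \sum_(z in R :\: B) f (z |: B) z.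
Proof.
rewrite (exchange_big_dep (fun z => z \in R)) /=; last first.
  by move=> B' z; rewrite !inE => /andP[sB _] zB; apply: (subsetP sB).
rewrite [RHS](exchange_big_dep (fun z => z \in R)) /=; last first.
  by move=> B z _; rewrite !inE => /andP[].
apply: eq_bigr => z zR.
rewrite (reindex_onto (fun B => z |: B) (fun B' => B' :\ z)) /=; last first.
  by move=> B' /andP[_ zB]; rewrite setD1K.
apply: eq_bigl => B; rewrite !inE.
case: (boolP (z \in B)) => zB /=.
  have ne : (z |: B) :\ z != B by apply/eqP => E; move: zB; rewrite -E !inE eqxx.
  by rewrite (negbTE ne) !andbF.
rewrite setU1K // eqxx andbT zR /= cardsU1 zB add1n eqSS.
by rewrite subUset sub1set zR /= eqxx.
Qed.

End DC.

Section Pack.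
Variables (J Q : finType) (I : {set J}) (F : J -> {set Q}) (R : {set Q}).

Definition cls (B T : {set Q}) := [set y in I | F y :&: B == T].
Definition wB (B : {set Q}) (T : {set Q}) := #|cls B T|.
Definition tr (B : {set Q}) := #|[set F y :&: B | y in I]|.
Definition fshat (S : {set Q}) :=
  forall U : {set Q}, U \subset S -> exists2 y, y \in I & F y :&: S = U.

Lemma Ww_wB B : Ww B (wB B) = #|I|.
Proof.
rewrite -sum1_card (partition_big (fun y => F y :&: B) (fun T => T \in powerset B)) /=;
  last by move=> y _; rewrite inE subsetIr.
apply: eq_bigr => T _; rewrite /wB /cls -sum1_card; apply: eq_bigl => y.
by rewrite !inE.
Qed.

Lemma supp_wB B T : 0 < wB B T -> T \subset B.
Proof.
rewrite /wB card_gt0 => /set0Pn [y]; rewrite !inE => /andP[_ /eqP <-].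
exact: subsetIr.
Qed.

Lemma vc_wB (d0 : nat) (B : {set Q}) : (forall S : {set Q}, S \subset R -> fshat S -> #|S| <= d0) ->
  B \subset R -> forall S : {set Q}, S \subset B -> shat (wB B) S -> #|S| <= d0.
Proof.
move=> vc sBR S sSB sh; apply: vc; first exact: subset_trans sSB sBR.
move=> U sU; have [T [wT TU]] := sh U sU.
move: wT; rewrite /wB card_gt0 => /set0Pn [y]; rewrite !inE => /andP[yI /eqP FyT].
exists y => //; rewrite -TU -FyT -setIA; congr (_ :&: _).
by rewrite (setIidPr sSB).
Qed.

Lemma Ew_wB_le (d0 : nat) (B : {set Q}) : (forall S : {set Q}, S \subset R -> fshat S -> #|S| <= d0) ->
  B \subset R -> Ew B (wB B) <= d0 * #|I|.
Proof.
move=> vc sBR; rewrite -(Ww_wB B).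
apply: (@edge_bound _ #|B|) => //; first exact: supp_wB.
exact: vc_wB.
Qed.


Lemma sum_b (T0 : finType) (D : {set T0}) (b : pred T0) :
  \sum_(z in D) (b z : nat) = #|[set z in D | b z]|.
Proof.
rewrite -sum1_card [RHS]big_mkcond [LHS]big_mkcond /=; apply: eq_bigr => z _.
by rewrite !inE; case: (z \in D); case: (b z).
Qed.

Lemma sum_split_pred (T0 : finType) (C : {set T0}) (P : pred T0) (g : T0 -> nat) :
  \sum_(y in C) g y = \sum_(y in [set y in C | P y]) g y + \sum_(y in [set y in C | ~~ P y]) g y.
Proof.
rewrite (bigID P) /=; congr (_ + _); apply: eq_bigl => y; by rewrite !inE.
Qed.

Lemma pair_count (C : {set J}) (D : {set Q}) (d : nat) :
  (forall y y', y \in C -> y' \in C -> y != y' ->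
     d <= #|[set z in D | (z \in F y) != (z \in F y')]|) ->
  d * (#|C| - 1) <= 2 * \sum_(z in D)
     minn #|[set y in C | z \notin F y]| #|[set y in C | z \in F y]|.
Proof.
move=> hd.
case: (posnP #|C|) => [-> | cpos]; first by rewrite sub0n muln0.
set c := #|C|.
have c01 z : #|[set y in C | z \notin F y]| + #|[set y in C | z \in F y]| = c.
  rewrite /c -(cardsID [set y | z \in F y] C) addnC; congr (_ + _);
  by apply: eq_card => y; rewrite !inE andbC.
have per z : \sum_(y in C) \sum_(y' in C) ((z \in F y) != (z \in F y') : nat) =
   2 * (#|[set y in C | z \notin F y]| * #|[set y in C | z \in F y]|).
  rewrite (sum_split_pred C (fun y => z \in F y)).
  rewrite (eq_bigr (fun _ => #|[set y in C | z \notin F y]|)); last first.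
    move=> y; rewrite inE => /andP[_ zy]; rewrite sum_b; apply: eq_card => y'.
    by rewrite !inE zy.
  rewrite [X in _ + X](eq_bigr (fun _ => #|[set y in C | z \in F y]|)); last first.
    move=> y; rewrite inE => /andP[_ zy]; rewrite sum_b; apply: eq_card => y'.
    by rewrite !inE (negbTE zy); case: (z \in F y').
  rewrite !sum_nat_const; lia.
have key : c * (d * (c - 1)) <= c * (2 * \sum_(z in D)
     minn #|[set y in C | z \notin F y]| #|[set y in C | z \in F y]|).
  apply: (@leq_trans (\sum_(z in D) \sum_(y in C) \sum_(y' in C)
             ((z \in F y) != (z \in F y') : nat))).
    rewrite exchange_big /=.
    apply: (@leq_trans (\sum_(y in C) (c - 1) * d)); first by rewrite sum_nat_const; lia.
    apply: leq_sum => y yC; rewrite exchange_big /=.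
    rewrite (bigD1 y yC) /= big1 ?add0n; last by move=> z _; rewrite eqxx.
    apply: (@leq_trans (\sum_(y' in C | y' != y) d)).
      rewrite sum_nat_const; apply: leq_mul => //.
      rewrite /c (cardsD1 y C) yC add1n subn1 /=; apply: eq_leq; apply: eq_card => y'.
      by rewrite !inE andbC.
    apply: leq_sum => y' /andP[y'C ne]; rewrite sum_b; apply: hd => //.
    by rewrite eq_sym.
  rewrite mulnA big_distrr /=; apply: leq_sum => z _; rewrite per.
  have := c01 z; set a := #|[set y in C | z \notin F y]|; set b := #|[set y in C | z \in F y]|.
  move=> <-; nia.
by rewrite leq_pmul2l in key.
Qed.


Lemma FzB (y : J) (B : {set Q}) z :
  F y :&: (z |: B) = if z \in F y then z |: (F y :&: B) else F y :&: B.
Proof.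
apply/setP => x; case: (boolP (z \in F y)) => zF; rewrite !inE;
  case: (eqVneq x z) => [-> | //]; by rewrite ?zF ?(negbTE zF).
Qed.

Lemma cls_z (B T : {set Q}) (z : Q) : z \notin B -> T \subset B ->
  wB (z |: B) T = #|[set y in cls B T | z \notin F y]| /\
  wB (z |: B) (z |: T) = #|[set y in cls B T | z \in F y]|.
Proof.
move=> zB sTB; have zT : z \notin T by apply: contra zB; apply: (subsetP sTB).
have zFB y : z \notin F y :&: B by rewrite inE negb_and zB orbT.
split; apply: eq_card => y; rewrite !inE FzB; case: (boolP (z \in F y)) => zF /=.
- rewrite andbF; apply/negbTE; rewrite negb_and; apply/orP; right.
  by apply: contra zT => /eqP <-; exact: setU11.
- by rewrite andbT.
- rewrite andbT; congr (_ && _); apply/eqP/eqP => [E | -> //].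
  by rewrite -(setU1K (zFB y)) E setU1K.
- rewrite andbF; apply/negbTE; rewrite negb_and; apply/orP; right; apply/negP => /eqP E.
  by move: (zFB y); rewrite E setU11.
Qed.


Lemma lowerB (d : nat) (B : {set Q}) : (forall y, F y \subset R) -> B \subset R ->
  (forall y y', y \in I -> y' \in I -> y != y' ->
     d <= #|(F y :\: F y') :|: (F y' :\: F y)|) ->
  d * (#|I| - tr B) <= 2 * \sum_(z in R :\: B)
     \sum_(S in powerset ((z |: B) :\ z)) minn (wB (z |: B) S) (wB (z |: B) (z |: S)).
Proof.
move=> FR sBR hd.
rewrite (eq_bigr (fun z => \sum_(T in powerset B)
   minn #|[set y in cls B T | z \notin F y]| #|[set y in cls B T | z \in F y]|)); last first.
  move=> z; rewrite inE => /andP[zB _]; rewrite setU1K //; apply: eq_bigr => T.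
  by rewrite inE => sTB; have [-> ->] := cls_z zB sTB.
rewrite exchange_big big_distrr /=.
apply: (@leq_trans (\sum_(T in powerset B) d * (#|cls B T| - 1))); last first.
  apply: leq_sum => T; rewrite inE => sTB; apply: pair_count => y y'.
  rewrite !inE => /andP[yI /eqP yT] /andP[y'I /eqP y'T] ne.
  apply: (leq_trans (hd _ _ yI y'I ne)); apply: subset_leq_card.
  apply/subsetP => x xD; rewrite !inE.
  have xR : x \in R.
    by move: xD; rewrite !inE => /orP[/andP[_ /(subsetP (FR _))] | /andP[_ /(subsetP (FR _))]].
  have xB : x \notin B.
    apply/negP => xB; move: xD.
    have := congr1 (fun X : {set Q} => x \in X) (etrans yT (esym y'T)); rewrite !inE xB !andbT => ->.
    by rewrite !andNb.
  rewrite xR xB /=; move: xD; rewrite !inE.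
  by case: (x \in F y); case: (x \in F y').
rewrite -big_distrr /=; apply: leq_mul => //.
have e1 : \sum_(T in powerset B) #|cls B T| = #|I| by have := Ww_wB B.
have e2 : \sum_(T in powerset B) (0 < #|cls B T| : nat) = tr B.
  rewrite sum_b /tr; apply: eq_card => T; rewrite !inE; apply/andP/imsetP.
    by case=> _; rewrite card_gt0 => /set0Pn [y]; rewrite !inE => /andP[yI /eqP <-]; exists y.
  case=> y yI ->; split; first exact: subsetIr.
  by rewrite card_gt0; apply/set0Pn; exists y; rewrite !inE yI eqxx.
have e3 : \sum_(T in powerset B) (#|cls B T| - 1) + \sum_(T in powerset B) (0 < #|cls B T| : nat)
   = \sum_(T in powerset B) #|cls B T|.
  rewrite -big_split /=; apply: eq_bigr => T _; case: #|cls B T| => //= n.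
  by rewrite subn1 addn1.
by rewrite -e1 -e3 e2 addnK.
Qed.

End Pack.

Lemma draws_pos (Q : finType) (R : {set Q}) s : s <= #|R| -> 0 < #|draws R s|.
Proof.
move=> sR; apply/card_gt0P; exists [set x in take s (enum R)].
rewrite !inE; apply/andP; split.
  by apply/subsetP => x; rewrite inE => /mem_take; rewrite mem_enum.
rewrite cardsE; apply/eqP; rewrite (card_uniqP _); last exact/take_uniq/enum_uniq.
by rewrite size_takel // -cardE.
Qed.

Section Pack2.
Variables (J Q : finType) (I : {set J}) (F : J -> {set Q}) (R : {set Q}).

Lemma packing (d0 r d s : nat) :
  (forall y, F y \subset R) ->
  (forall B : {set Q}, B \subset R -> 0 < #|B| -> tr I F B <= r * #|B|) ->
  (forall S : {set Q}, S \subset R -> fshat I F S -> #|S| <= d0) ->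
  (forall y y', y \in I -> y' \in I -> y != y' ->
     d <= #|(F y :\: F y') :|: (F y' :\: F y)|) ->
  0 < s -> s < #|R| ->
  d * (#|I| - r * s) * s.+1 <= 2 * d0 * #|I| * (#|R| - s).
Proof.
move=> FR trle vc hd s0 sR.
set b1 := #|draws R s|; set b2 := #|draws R s.+1|.
have cnt : b2 * s.+1 = b1 * (#|R| - s).
  have := double_count R s (fun _ _ => 1).
  rewrite (eq_bigr (fun _ => s.+1)); last first.
    by move=> B'; rewrite sum1_card inE => /andP[_ /eqP].
  rewrite [RHS](eq_bigr (fun _ => #|R| - s)); last first.
    move=> B; rewrite inE sum1_card => /andP[sB /eqP cB].
    by rewrite cardsD (setIidPr sB) cB.
  by rewrite !sum_nat_const.
have up : \sum_(B' in draws R s.+1) Ew B' (wB I F B') <= b2 * (d0 * #|I|).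
  rewrite -sum_nat_const; apply: leq_sum => B'; rewrite inE => /andP[sB _].
  exact: (Ew_wB_le vc sB).
have low : b1 * (d * (#|I| - r * s)) <= 2 * \sum_(B' in draws R s.+1) Ew B' (wB I F B').
  rewrite /Ew (double_count R s (fun B' z => \sum_(S in powerset (B' :\ z))
      minn (wB I F B' S) (wB I F B' (z |: S)))) big_distrr /=.
  rewrite -sum_nat_const; apply: leq_sum => B; rewrite inE => /andP[sB /eqP cB].
  apply: (leq_trans _ (lowerB FR sB hd)); apply: leq_mul => //.
  by apply: leq_sub2l; rewrite -cB; apply: trle => //; rewrite cB.
have b1pos : 0 < b1 by apply: draws_pos; exact: ltnW.
rewrite -(leq_pmul2l b1pos).
apply: (@leq_trans (2 * (\sum_(B' in draws R s.+1) Ew B' (wB I F B')) * s.+1)).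
  by rewrite [X in X <= _]mulnA; apply: leq_mul low (leqnn _).
apply: (@leq_trans (2 * (b2 * (d0 * #|I|)) * s.+1)).
  by apply: leq_mul => //; apply: leq_mul.
have -> : 2 * (b2 * (d0 * #|I|)) * s.+1 = 2 * (d0 * #|I|) * (b2 * s.+1) by nia.
by rewrite cnt; apply: eq_leq; nia.
Qed.

End Pack2.

Lemma sq_le_exp n : 4 <= n -> n * n <= 2 ^ n.
Proof.
elim: n => // n IH; rewrite ltnS leq_eqVlt => /orP[/eqP <- // | n4].
have := IH n4; rewrite expnS => h.
have : 2 * n + 1 <= n * n by nia.
nia.
Qed.

Lemma vc_from_tr (J Q : finType) (I : {set J}) (F : J -> {set Q}) (R : {set Q}) (r : nat) :
  (forall B : {set Q}, B \subset R -> 0 < #|B| -> tr I F B <= r * #|B|) ->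
  forall S : {set Q}, S \subset R -> fshat I F S -> #|S| <= r + 3.
Proof.
move=> trle S sSR sh.
case: (posnP #|S|) => [-> // | Spos].
have h2 : 2 ^ #|S| <= r * #|S|.
  rewrite -card_powerset; apply: leq_trans (trle _ sSR Spos).
  apply: subset_leq_card; apply/subsetP => U; rewrite inE => sU.
  have [y yI <-] := sh U sU; exact: imset_f.
case: (leqP #|S| 3) => [|S4]; first lia.
have := sq_le_exp S4 => h; nia.
Qed.

Lemma arith (r m n N q k : nat) : k = 64 * (r+3)^5 ->
  n <= (2*r+1) * m -> k < n -> N <= r * n -> 0 < N -> k * q <= 4 * (r+3) * N ->
  4 * (r+3) * N < k * q.+1 ->
  k * (m - r * q.+1) * q.+2 <= 2 * (r+3) * m * (N - q.+1) -> False.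
Proof.
move=> kE hn kn hN N0 hq1 hq2 hmain.
set X := m - r * q.+1.
have h1 : 4 * (r+3) * N * X <= 2 * (r+3) * m * N.
  apply: (@leq_trans (k * X * q.+2)).
    have : 4 * (r + 3) * N <= k * q.+2 by apply: ltnW; apply: (leq_trans hq2); rewrite leq_mul2l ltnW ?orbT.
    by move=> h; have := leq_mul h (leqnn X); lia.
  apply: (leq_trans hmain); rewrite leq_mul2l; apply/orP; right; apply: leq_subr.
have h2 : 2 * X <= m.
  have pos : 0 < 2 * (r + 3) * N by rewrite !muln_gt0 N0 addn_gt0 orbT.
  rewrite -(leq_pmul2l pos); move: h1; nia.
have h3 : m <= 2 * r * q.+1 by rewrite /X in h2; lia.
have h4 : n <= (2*r+1) * (2 * r * q.+1) by apply: (leq_trans hn); rewrite leq_mul2l h3 orbT.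
have h5 : k * q <= 4 * (r+3) * (r * n) by apply: (leq_trans hq1); rewrite leq_mul2l hN orbT.
set c := (2*r+1) * (2*r).
have h6 : k * n <= c * (k * q) + c * k.
  have : k * n <= k * ((2*r+1) * (2 * r * q.+1)) by rewrite leq_mul2l h4 orbT.
  move=> h; apply: (leq_trans h); rewrite /c; lia.
have h7 : k * n <= c * (4 * (r+3) * (r * n)) + c * k.
  by apply: (leq_trans h6); rewrite leq_add2r leq_mul2l h5 orbT.
set t := r + 3.
have rt : r <= t by rewrite /t leq_addr.
have t3 : 3 <= t by rewrite /t leq_addl.
have hc : c <= 4 * (t * t).
  rewrite /c; have a1 : 2 * r + 1 <= 2 * t by lia.
  have a2 : 2 * r <= 2 * t by lia.
  have := leq_mul a1 a2; lia.
have hA : 2 * (c * (4 * t * r)) <= k.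
  have e5 : t ^ 5 = t * t * t * t * t by rewrite !expnS expn0 muln1; lia.
  rewrite kE e5.
  have a1 : 4 * t * r <= 4 * (t * t) by rewrite -mulnA leq_mul2l leq_mul2l rt !orbT.
  have := leq_mul hc a1 => h.
  apply: (leq_trans (leq_mul (leqnn 2) h)).
  have : 1 <= t by lia.
  move=> t1; have := leq_mul (leqnn (32 * (t*t*t*t))) t1; lia.
have hA' : 2 * (c * (4 * (r+3) * r)) <= k := hA.
have h8 : k * n <= 2 * c * k.
  have a : 2 * (c * (4 * (r+3) * (r * n))) <= k * n.
    have := leq_mul hA' (leqnn n).
    have -> : 2 * (c * (4 * (r+3) * (r * n))) = 2 * (c * (4 * (r+3) * r)) * n by rewrite !mulnA.
    by [].
  have b : 2 * (k * n) <= 2 * (c * (4 * (r+3) * (r * n))) + 2 * (c * k).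
    by rewrite -mulnDr leq_mul2l h7 orbT.
  lia.
have k0 : 0 < k by rewrite kE muln_gt0 expn_gt0 addn_gt0 orbT.
have h9 : n <= 2 * c.
  by rewrite -(leq_pmul2l k0); apply: (leq_trans h8); rewrite mulnC mulnA.
have h10 : 2 * c < k.
  rewrite kE; have e5 : t ^ 5 = t * t * t * t * t by rewrite !expnS expn0 muln1; lia.
  rewrite -/t e5; apply: (leq_ltn_trans (leq_mul (leqnn 2) hc)).
  have : 3 <= t := t3.
  move=> h; have := leq_mul (leq_mul (leq_mul h h) h) (leqnn (t*t)); lia.
lia.
Qed.

Section Indep.
Variable T : finType.
Variable h : rel T.
Hypothesis hsym : symmetric h.
Hypothesis hirr : irreflexive h.

Lemma deg_sum (S : {set T}) :
  \sum_(y in S) #|[set w in S | h y w]| =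
  #|[set p : T * T | (p.1 \in S) && (p.2 \in S) && h p.1 p.2]|.
Proof.
rewrite -sum1_card [RHS]big_mkcond /=.
transitivity (\sum_(y : T) \sum_(w : T) (if (y \in S) && (w \in S) && h y w then 1 else 0)).
  rewrite [LHS]big_mkcond /=; apply: eq_bigr => y _.
  case: (boolP (y \in S)) => yS.
    rewrite -sum1_card big_mkcond /=; apply: eq_bigr => w _; by rewrite !inE.
  by rewrite big1 // => w _.
by rewrite pair_bigA; apply: eq_bigr => p _; rewrite !inE.
Qed.

Lemma indep (D : nat) n : forall P : {set T}, #|P| <= n ->
  (forall S : {set T}, S \subset P ->
     #|[set p : T * T | (p.1 \in S) && (p.2 \in S) && h p.1 p.2]| <= D * #|S|) ->
  exists2 I : {set T}, I \subset P &
    (forall y w, y \in I -> w \in I -> ~~ h y w) /\ #|P| <= D.+1 * #|I|.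
Proof.
elim: n => [|n IH] P cP hyp.
  exists set0; first exact: sub0set.
  by split; [move=> y w; rewrite inE | move: cP; rewrite leqn0 => /eqP ->].
case: (set_0Vmem P) => [-> | [y0 y0P]].
  by exists set0; [exact: sub0set | split; [move=> y w; rewrite inE | rewrite cards0]].
have [y yP ydeg] : exists2 y, y \in P & #|[set w in P | h y w]| <= D.
  case: (boolP [exists y in P, #|[set w in P | h y w]| <= D]) => [/exists_inP // | /exists_inPn hall].
  have := hyp P (subxx _); rewrite -deg_sum.
  have : \sum_(y in P) D.+1 <= \sum_(y in P) #|[set w in P | h y w]|.
    by apply: leq_sum => y yP; have := hall y yP; rewrite -ltnNge.
  rewrite sum_nat_const => h1 h2.
  have : #|P| * D.+1 <= D * #|P| by apply: leq_trans h1 h2.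
  have : 0 < #|P| by apply/card_gt0P; exists y0.
  nia.
set P' := P :\: (y |: [set w in P | h y w]).
have sP' : P' \subset P by apply: subsetDl.
have cP' : #|P| <= #|P'| + D.+1.
  rewrite /P' cardsD; apply: (@leq_trans (#|P| - #|P :&: (y |: [set w in P | h y w])| +
          #|P :&: (y |: [set w in P | h y w])|)); first by rewrite subnK // subset_leq_card // subsetIl.
  rewrite leq_add2l; apply: (leq_trans (subset_leq_card (subsetIr _ _))).
  by rewrite cardsU1; case: (_ \notin _) => /=; lia.
have yP' : y \notin P' by rewrite !inE eqxx.
have [I' sI' [indI' cI']] : exists2 I : {set T}, I \subset P' &
    (forall y w, y \in I -> w \in I -> ~~ h y w) /\ #|P'| <= D.+1 * #|I|.
  apply: IH; last by move=> S sS; apply: hyp; apply: subset_trans sS sP'.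
  have : #|P'| < #|P| by apply: proper_card; apply/properP; split => //; exists y.
  lia.
exists (y |: I').
  by apply/subsetP => x; rewrite !inE => /orP[/eqP -> // | /(subsetP sI') /(subsetP sP')].
split.
  have key w : w \in I' -> ~~ h y w.
    move=> /(subsetP sI'); rewrite !inE => /andP[H wP].
    by apply/negP => hyw; rewrite wP hyw orbT in H.
  move=> a b; rewrite !inE => /orP[/eqP -> | aI] /orP[/eqP -> | bI].
  - by rewrite hirr.
  - exact: key.
  - by rewrite hsym; apply: key.
  - exact: indI'.
have yI' : y \notin I' by apply: contra yP'; apply: (subsetP sI').
rewrite cardsU1 yI' /=; lia.
Qed.

End Indep.

Lemma pair_inj (T : finType) (a b a' b' : T) : a != b -> a' != b' ->
  [set a; b] = [set a'; b'] ->
  (enum_rank a < enum_rank b) = (enum_rank a' < enum_rank b') -> a = a' /\ b = b'.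
Proof.
move=> ab ab' E rk.
have bin : b \in [set a'; b'] by rewrite -E !inE eqxx orbT.
have ain : a \in [set a'; b'] by rewrite -E !inE eqxx.
have a'in : a' \in [set a; b] by rewrite E !inE eqxx.
rewrite !inE in bin ain a'in.
case: (eqVneq a a') => [aa | naa].
  split => //; subst a'; move: bin; rewrite eq_sym (negbTE ab) /=.
  by move/eqP.
have ab'e : a = b' by move: ain; rewrite (negbTE naa) /= => /eqP.
have ba' : a' = b by move: a'in; rewrite eq_sym (negbTE naa) /= => /eqP.
subst b' a'; move: rk; case: (ltngtP (enum_rank a) (enum_rank b)) => //.
by move/val_inj/enum_rank_inj => E'; rewrite E' eqxx in ab.
Qed.

Section Main.
Variables (T : finType) (e : rel T).
Hypothesis esym : symmetric e.
Variable r : nat.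
Hypothesis heta : forall A : {set T}, 0 < #|A| ->
  #|[set nbhd e v :&: A | v : T]| <= r * #|A|.

Definition Kr := 64 * (r + 3) ^ 5.

Lemma inN (u v : T) : (u \in nbhd e v) = (v \in nbhd e u).
Proof. by rewrite !inE esym. Qed.

Lemma pairs_bound (P S : {set T}) : S \subset P ->
  #|[set p : T * T | (p.1 \in S) && (p.2 \in S) &&
     [rel y w | (y != w) && [exists v, nbhd e v :&: P == [set y; w]]] p.1 p.2]|
  <= (2 * r) * #|S|.
Proof.
move=> sSP.
case: (posnP #|S|) => [S0 | Spos].
  have -> : S = set0 by apply/eqP; rewrite -cards_eq0 S0.
  rewrite cards0 muln0 leqn0 cards_eq0; apply/eqP/setP => p; by rewrite !inE.
set Pr := [set p : T * T | _].
pose f (p : T * T) := ([set p.1; p.2], enum_rank p.1 < enum_rank p.2).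
have finj : {in Pr &, injective f}.
  move=> [a b] [a' b']; rewrite !inE /= => /andP[_ /andP[ab _]] /andP[_ /andP[ab' _]].
  by case=> E rk; have [-> ->] := pair_inj ab ab' E rk.
rewrite -(card_in_imset finj).
apply: (@leq_trans #|setX [set nbhd e v :&: S | v : T] [set: bool]|).
  apply: subset_leq_card; apply/subsetP => x /imsetP [[a b]]; rewrite !inE /=.
  move=> /andP[/andP[aS bS] /andP[ab /existsP [v /eqP hv]]] ->; rewrite andbT /=.
  apply/imsetP; exists v => //; apply/setP => u; rewrite !inE.
  have := congr1 (fun X : {set T} => u \in X) hv; rewrite !inE => hx.
  case: (boolP (u \in S)) => xS; rewrite ?andbT ?andbF.
    by rewrite -hx (subsetP sSP u xS) andbT.
  by apply/negbTE; apply: contra xS => /orP[/eqP -> | /eqP ->].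
rewrite cardsX cardsT card_bool mulnC -mulnA leq_mul2l /=.
exact: heta.
Qed.


Lemma near_twins (P : {set T}) : Kr < #|P| ->
  exists y, exists w, [/\ y \in P, w \in P, y != w,
   (forall v, nbhd e v :&: P != [set y; w]) &
   #|[set nbhd e v :&: P | v in [set v | (y \in nbhd e v) != (w \in nbhd e v)]]| < Kr].
Proof.
move=> KP.
pose h := [rel y w | (y != w) && [exists v, nbhd e v :&: P == [set y; w]]].
have hsym : symmetric h.
  move=> y w; rewrite /= eq_sym; congr (_ && _); apply: eq_existsb => v.
  by rewrite setUC.
have hirr : irreflexive h by move=> y; rewrite /= eqxx.
have [I sIP [indI cI]] := indep hsym hirr (leqnn #|P|) (fun S sS => pairs_bound sS).
have Ppos : 0 < #|P| by apply: leq_ltn_trans KP.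
pose tp v := nbhd e v :&: P.
pose R := [set v | [forall u, (tp u == tp v) ==> (enum_rank v <= enum_rank u)]].
have repex v : exists2 rho, rho \in R & tp rho = tp v.
  case: (@arg_minnP _ v (fun u => tp u == tp v) (fun u => nat_of_ord (enum_rank u)) (eqxx _)).
  move=> rho /eqP trho minrho; exists rho => //; rewrite inE.
  apply/forallP => u; apply/implyP => /eqP tu; apply: minrho.
  by rewrite tu trho.
have repinj : {in R &, injective tp}.
  move=> a b; rewrite !inE => /forallP ha /forallP hb tab.
  have := ha b; have := hb a; rewrite tab eqxx /= => h1 h2.
  by apply: enum_rank_inj; apply: val_inj; apply/eqP; rewrite eqn_leq h1 h2.
have cR : #|R| <= r * #|P|.
  rewrite -(card_in_imset repinj); apply: leq_trans (heta Ppos).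
  by apply: subset_leq_card; apply/subsetP => x /imsetP [v _ ->]; apply: imset_f.
pose F y := nbhd e y :&: R.
have FR y : F y \subset R by apply: subsetIr.
have trle (B : {set T}) : B \subset R -> 0 < #|B| -> tr I F B <= r * #|B|.
  move=> sBR Bpos; apply: leq_trans (heta Bpos).
  apply: subset_leq_card; apply/subsetP => x /imsetP [y _ ->].
  apply/imsetP; exists y => //; rewrite /F -setIA; congr (_ :&: _).
  by apply/setIidPr.
have vc := vc_from_tr trle.
case: (boolP [exists y in I, exists w in I,
   (y != w) && (#|(F y :\: F w) :|: (F w :\: F y)| < Kr)]).
  move=> /exists_inP [y yI /exists_inP [w wI /andP[yw dyw]]].
  have yP := subsetP sIP y yI; have wP := subsetP sIP w wI.
  exists y, w; split => //.
    move=> v; apply/negP => /eqP hv; move: (indI y w yI wI); rewrite /= yw /=.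
    by move/existsPn => /(_ v); rewrite hv eqxx.
  apply: leq_ltn_trans dyw.
  apply: (@leq_trans #|[set tp rho | rho in R :&: [set v | (y \in nbhd e v) != (w \in nbhd e v)]]|).
    apply: subset_leq_card; apply/subsetP => x /imsetP [v]; rewrite inE => sv ->.
    have [rho rR trho] := repex v; apply/imsetP; exists rho => //.
    rewrite in_setI rR /= inE.
    have my : (y \in nbhd e rho) = (y \in nbhd e v).
      by have := congr1 (fun X : {set T} => y \in X) trho; rewrite !inE yP !andbT.
    have mw : (w \in nbhd e rho) = (w \in nbhd e v).
      by have := congr1 (fun X : {set T} => w \in X) trho; rewrite !inE wP !andbT.
    by rewrite my mw.
  apply: leq_trans (leq_imset_card _ _) _.
  apply: subset_leq_card; apply/subsetP => x; rewrite in_setI => /andP[xR]; rewrite inE => sx.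
  rewrite !in_setU !in_setD !in_setI xR !andbT (inN x y) (inN x w).
  by move: sx; case: (y \in nbhd e x); case: (w \in nbhd e x).
move=> /exists_inPn hall.
have far y w : y \in I -> w \in I -> y != w ->
    Kr <= #|(F y :\: F w) :|: (F w :\: F y)|.
  move=> yI wI yw; have := hall y yI; move/exists_inPn => /(_ w wI).
  by rewrite yw /= -leqNgt.
have I2 : 1 < #|I|.
  rewrite ltnNge; apply/negP => I1.
  have : #|P| <= (2 * r).+1 by apply: leq_trans cI _; rewrite -{2}(muln1 (2*r).+1) leq_mul2l I1 orbT.
  move=> h1; have : Kr < (2 * r).+1 by apply: leq_trans KP h1.
  rewrite /Kr; have : 2 * r + 1 <= 64 * (r+3)^5.
    have : r + 3 <= (r+3)^5 by rewrite -{1}(expn1 (r+3)) leq_pexp2l // addn_gt0 orbT.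
    lia.
  lia.
have [y [w [yI wI yw]]] : exists y w, [/\ y \in I, w \in I & y != w].
  have [y yI] : exists y, y \in I by apply/set0Pn; rewrite -card_gt0; apply: ltnW.
  have : 0 < #|I :\ y| by rewrite (cardsD1 y I) yI in I2.
  rewrite card_gt0 => /set0Pn [w]; rewrite !inE => /andP[wy wI].
  by exists y, w; split => //; rewrite eq_sym.
have KN : Kr <= #|R|.
  apply: leq_trans (far y w yI wI yw) _; apply: subset_leq_card.
  by rewrite subUset !(subset_trans (subsetDl _ _) (FR _)).
set N := #|R|.
set q := (4 * (r + 3) * N) %/ Kr.
have K0 : 0 < Kr by rewrite /Kr muln_gt0 expn_gt0 addn_gt0 orbT.
have hq1 : Kr * q <= 4 * (r + 3) * N by rewrite [Kr * _]mulnC; apply: leq_divM.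
have hq2 : 4 * (r + 3) * N < Kr * q.+1 by rewrite [Kr * _]mulnC; exact: ltn_ceil K0.
have K8 : 8 * (r + 3) <= Kr.
  rewrite /Kr; have : r + 3 <= (r+3)^5 by rewrite -{1}(expn1 (r+3)) leq_pexp2l // addn_gt0 orbT.
  lia.
have sN : q.+1 < N.
  have : q * (8 * (r + 3)) <= 4 * (r + 3) * N.
    by apply: leq_trans hq1; rewrite mulnC leq_mul2r K8 orbT.
  have : 3 <= N by apply: leq_trans KN; apply: leq_trans K8; lia.
  nia.
have := packing FR trle vc far (ltn0Sn q) sN.
move=> hpack.
exfalso; apply: (@arith r #|I| #|P| N q Kr) => //.
- by move: cI; rewrite mulSn mulnDl mul1n addnC.
- exact: leq_trans K0 KN.
Qed.


Lemma Kr_gt0 : 0 < Kr.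
Proof. by rewrite /Kr muln_gt0 expn_gt0 addn_gt0 orbT. Qed.

Definition cnt (c : T -> 'I_Kr) (A : {set T}) (i : 'I_Kr) :=
  #|[set u in A | c u == i]|.

Lemma base_color (P : {set T}) : #|P| <= Kr ->
  exists c : T -> 'I_Kr, forall v, nbhd e v :&: P != set0 ->
    exists i : 'I_Kr, odd (cnt c (nbhd e v :&: P) i).
Proof.
move=> PK; pose i0 : 'I_Kr := Ordinal Kr_gt0.
pose c u : 'I_Kr := insubd i0 (index u (enum P)).
have cv u : u \in P -> val (c u) = index u (enum P).
  move=> uP; rewrite /c val_insubd; case: ifP => // /negbT; rewrite -leqNgt => h.
  have : index u (enum P) < size (enum P) by rewrite index_mem mem_enum.
  by rewrite -cardE => h2; have := leq_trans h2 PK; rewrite ltnNge h.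
have cinj : {in P &, injective c}.
  move=> u u' uP u'P E; have := congr1 val E; rewrite !cv // => E'.
  have h1 : nth u (enum P) (index u (enum P)) = u by apply: nth_index; rewrite mem_enum.
  have h2 : nth u (enum P) (index u' (enum P)) = u' by apply: nth_index; rewrite mem_enum.
  by rewrite -h1 -h2 E'.
exists c => v /set0Pn [u uN]; exists (c u).
have uP : u \in P by move: uN; rewrite inE => /andP[].
rewrite /cnt.
have -> : [set u' in nbhd e v :&: P | c u' == c u] = [set u].
  apply/setP => u'; rewrite !inE; apply/andP/eqP => [[/andP[_ u'P] /eqP E] | ->].
    exact: cinj.
  by split => //; move: uN; rewrite !inE.
by rewrite cards1.
Qed.


Lemma color_main n : forall P : {set T}, #|P| <= n ->
  exists c : T -> 'I_Kr, forall v, nbhd e v :&: P != set0 ->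
    exists i : 'I_Kr, odd (cnt c (nbhd e v :&: P) i).
Proof.
elim: n => [|n IH] P cP.
  by apply: base_color; apply: leq_trans cP _.
case: (leqP #|P| Kr) => [PK | KP]; first exact: base_color.
have [y [w [yP wP yw notyw smallsep]]] := near_twins KP.
set P' := P :\ y :\ w.
have cP' : #|P'| <= n.
  have : #|P'| + 2 = #|P|.
    rewrite /P' (cardsD1 y P) yP (cardsD1 w (P :\ y)) !inE eq_sym yw wP /=; lia.
  lia.
have [c' hc'] := IH P' cP'.
pose Sep := [set v | (y \in nbhd e v) != (w \in nbhd e v)].
pose tp v := nbhd e v :&: P.
pose badt (tau : {set T}) (a : 'I_Kr) := (tau :&: P' != set0) &&
   [forall j, (j != a) ==> ~~ odd (cnt c' (tau :&: P') j)].
have tpP' v : tp v :&: P' = nbhd e v :&: P'.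
  rewrite /tp -setIA; congr (_ :&: _); apply/setIidPr.
  by rewrite /P'; apply: subset_trans (subsetDl _ _) (subsetDl _ _).
have buniq v a a' : badt (tp v) a -> badt (tp v) a' -> a = a'.
  rewrite /badt tpP' => /andP[ne /forallP ha] /andP[_ /forallP ha'].
  have [j oj] := hc' v ne.
  have := ha j; have := ha' j; rewrite oj /= !implybF !negbK => /eqP <- /eqP <-.
  by [].
pose i0 : 'I_Kr := Ordinal Kr_gt0.
pose ub tau := odflt i0 [pick a | badt tau a].
pose Bad := [set a | [exists v in Sep, badt (tp v) a]].
have cBad : #|Bad| < Kr.
  apply: leq_ltn_trans smallsep.
  apply: (@leq_trans #|[set ub tau | tau in [set tp v | v in Sep]]|); last first.
    exact: leq_imset_card.
  apply: subset_leq_card; apply/subsetP => a; rewrite inE => /exists_inP [v vS bv].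
  apply/imsetP; exists (tp v); first by apply: imset_f.
  rewrite /ub; case: pickP => [a' ba' | /(_ a)]; last by rewrite bv.
  by rewrite /= (buniq v a a' bv ba').
have [a aB] : exists a, a \notin Bad.
  apply/existsP; rewrite -negb_forall; apply/negP => /forallP allB.
  have : #|[set: 'I_Kr]| <= #|Bad|.
    by apply: subset_leq_card; apply/subsetP => x _; move: (allB x) => /negPn.
  by rewrite cardsT card_ord leqNgt cBad.
pose c u := if (u == y) || (u == w) then a else c' u.
exists c => v nv.
have cntE i : cnt c (nbhd e v :&: P) i =
    cnt c' (nbhd e v :&: P') i + (a == i) * ((y \in nbhd e v) + (w \in nbhd e v)).
  rewrite /cnt -(cardsID [set y; w]) addnC; congr (_ + _).
    apply: eq_card => u; rewrite !inE /c.
    case: (eqVneq u y) => [->|uy] /=; first by rewrite !andbF.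
    by case: (eqVneq u w) => [->|uw] /=; rewrite ?andbF.
  have cy : c y = a by rewrite /c eqxx.
  have cw : c w = a by rewrite /c eqxx orbT.
  case: (eqVneq a i) => [<- | ai]; last first.
    rewrite mul0n; apply/eqP; rewrite cards_eq0; apply/eqP/setP => u; rewrite !inE.
    apply/negbTE; apply/negP => /andP[/andP[_ /eqP cu] /orP[/eqP uy | /eqP uw]].
      by move: ai; rewrite -cu uy cy eqxx.
    by move: ai; rewrite -cu uw cw eqxx.
  rewrite mul1n.
  have memE u : (u \in [set u in nbhd e v :&: P | c u == a] :&: [set y; w]) =
      ((u == y) && (y \in nbhd e v)) || ((u == w) && (w \in nbhd e v)).
    rewrite !inE; case: (eqVneq u y) => [->|uy] /=; first by rewrite yP cy eqxx !andbT (negbTE yw) /= orbF.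
    case: (eqVneq u w) => [->|uw] /=; first by rewrite wP cw eqxx !andbT.
    by rewrite andbF.
  case: (boolP (y \in nbhd e v)) => yN; case: (boolP (w \in nbhd e v)) => wN /=.
  - have -> : [set u in nbhd e v :&: P | c u == a] :&: [set y; w] = [set y; w].
      by apply/setP => u; rewrite memE yN wN !inE !andbT.
    by rewrite cards2 yw.
  - have -> : [set u in nbhd e v :&: P | c u == a] :&: [set y; w] = [set y].
      by apply/setP => u; rewrite memE yN (negbTE wN) !inE !andbT !andbF orbF.
    by rewrite cards1.
  - have -> : [set u in nbhd e v :&: P | c u == a] :&: [set y; w] = [set w].
      by apply/setP => u; rewrite memE (negbTE yN) wN !inE !andbT !andbF.
    by rewrite cards1.
  - apply/eqP; rewrite cards_eq0; apply/eqP/setP => u.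
    by rewrite memE (negbTE yN) (negbTE wN) !inE !andbF.
have inP' u : (u \in P') = [&& u != w, u != y & u \in P] by rewrite !inE.
case: (boolP (nbhd e v :&: P' != set0)) => ne'.
  have [j oj] := hc' v ne'.
  case: (boolP (v \in Sep)) => vS; last first.
    exists j; rewrite cntE.
    move: vS; rewrite inE negbK => /eqP ->.
    by rewrite oddD oj oddM oddD addbb andbF.
  have : a \notin Bad := aB.
  rewrite inE negb_exists => /forallP /(_ v); rewrite vS /= /badt tpP' ne' /=.
  rewrite negb_forall => /existsP [j' ]; rewrite negb_imply => /andP[j'a /negPn oj'].
  have aj : (a == j') = false by rewrite eq_sym; exact: negbTE.
  by exists j'; rewrite cntE aj mul0n addn0.
move: ne'; rewrite negbK => /eqP ne'.
exists a; rewrite cntE eqxx mul1n.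
have -> : cnt c' (nbhd e v :&: P') a = 0.
  by rewrite /cnt ne'; apply/eqP; rewrite cards_eq0; apply/eqP/setP => u; rewrite !inE.
have memP u : u \in nbhd e v :&: P -> (u == y) || (u == w).
  move=> uNP; apply/negPn/negP; rewrite negb_or => /andP[uy uw].
  have : u \in nbhd e v :&: P' by move: uNP; rewrite !inE uy uw.
  by rewrite ne' inE.
case: (boolP (y \in nbhd e v)) => yN; case: (boolP (w \in nbhd e v)) => wN //=.
  have E : nbhd e v :&: P = [set y; w].
    apply/setP => u; apply/idP/idP => [/memP | ]; first by rewrite !inE.
    rewrite !inE => /orP[/eqP -> | /eqP ->]; [move: yN | move: wN]; rewrite inE => ->;
      by rewrite ?yP ?wP.
  by move: (notyw v); rewrite E eqxx.
move: nv => /set0Pn [u uNP]; have := memP u uNP.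
by case/orP => /eqP ue; move: uNP; rewrite ue inE ?(negbTE yN) ?(negbTE wN).
Qed.

End Main.

Theorem lemma3p2 :
  forall r : nat, exists k : nat,
  forall (T : finType) (e : rel T) (X Y : {set T}),
    simple_graph e -> bipartition e X Y ->
    (forall m : nat, 0 < m -> eta e m <= r * m) ->
    exists c : T -> 'I_k,
      forall v, v \in X -> nbhd e v != set0 ->
        exists i : 'I_k, odd #|[set u in nbhd e v :&: Y | c u == i]|.
Proof.
move=> r; exists (Kr r) => T e X Y [esym _] [XY0 _ bip] heta.
have heta' (A : {set T}) : 0 < #|A| -> #|[set nbhd e v :&: A | v : T]| <= r * #|A|.
  move=> Apos; apply: leq_trans (heta _ Apos); rewrite /eta.
  exact: (@leq_bigmax_cond _ (fun A' : {set T} => #|A'| == #|A|)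
            (fun A' => #|[set nbhd e v :&: A' | v : T]|) A (eqxx _)).
have [c hc] := color_main esym heta' (leqnn #|Y|).
exists c => v vX /set0Pn [u uN].
apply: hc; apply/set0Pn; exists u; rewrite inE uN /=.
move: uN; rewrite inE => /bip [[_ //] | [vY _]].
have : v \in X :&: Y by rewrite inE vX vY.
by rewrite XY0 inE.
Qed.
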